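(* Let $\gamma:[0,1]\to\mathbb T^2$ be an arc-length parametrized unit length curve with curvature bounded below by a positive constant. For a positive integer $m$ let $\lambda=2\pi\sqrt m$, $\mathcal E_\lambda=\{\mu\in\mathbb Z^2:\|\mu\|^2=m\}$, $N=|\mathcal E_\lambda|$, and let $\Phi(x)=\sum_{\mu\in\mathcal E_\lambda}a_\mu e^{2\pi i\langle\mu,x\rangle}$ with $\sum_\mu|a_\mu|^2=1$. Suppose $\lambda$ satisfies $\min_{\mu_1\ne\mu_2\in\mathcal E_\lambda}\|\mu_1-\mu_2\|\gg\lambda/\log^{3/2+\varepsilon}\lambda$ for some $\varepsilon>0$, and let $I\subset[0,1]$ be an interval with $|I|>\lambda^{-1/2}(\log\lambda)^{3/4+\varepsilon}N$. Then $$\frac1{|I|}\int_I|\Phi(\gamma(t))|^2\,dt\ge\frac12.$$ *)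

(* Defs.v *)
From Stdlib Require Import Reals Lra ZArith List.
From Coquelicot Require Import Coquelicot.
Open Scope R_scope.

Definition zrange (m : nat) : list Z :=
  map (fun k => (Z.of_nat k - Z.of_nat m)%Z) (seq 0 (2 * m + 1)).

(* E_lambda = { mu in Z^2 : |mu|^2 = m }, listed without repetition
   (every such mu has coordinates in [-m, m]). *)
Definition Elam (m : nat) : list (Z * Z) :=
  filter (fun p => Z.eqb (fst p * fst p + snd p * snd p)%Z (Z.of_nat m))
         (list_prod (zrange m) (zrange m)).

Definition Ncard (m : nat) : nat := length (Elam m).

Definition lam (m : nat) : R := 2 * PI * sqrt (INR m).

Definition cexpi (th : R) : C := (cos th, sin th).

Definition Phi (m : nat) (a : Z * Z -> C) (x : R * R) : C :=
  fold_right Cplus 0%C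
    (map (fun mu => Cmult (a mu)
             (cexpi (2 * PI * (IZR (fst mu) * fst x + IZR (snd mu) * snd x))))
         (Elam m)).

Definition l2sq (m : nat) (a : Z * Z -> C) : R :=
  fold_right Rplus 0 (map (fun mu => (Cmod (a mu)) ^ 2) (Elam m)).

Definition zdist (p q : Z * Z) : R :=
  sqrt ((IZR (fst p) - IZR (fst q)) ^ 2 + (IZR (snd p) - IZR (snd q)) ^ 2).

Definition smooth (f : R -> R) : Prop :=
  forall (n : nat) (t : R), ex_derive (Derive_n f n) t.

(* Main.v *)
Require Import Defs.
From Stdlib Require Import Reals Lra ZArith List.
From Coquelicot Require Import Coquelicot.
Open Scope R_scope.

Lemma cR_mult (f g : R -> R) x : continuous f x -> continuous g x -> continuous (fun y => f y * g y) x.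
Proof. intros; apply (continuous_mult f g); auto. Qed.
Lemma cR_plus (f g : R -> R) x : continuous f x -> continuous g x -> continuous (fun y => f y + g y) x.
Proof. intros; apply (continuous_plus f g); auto. Qed.
Lemma cR_inv (f : R -> R) x : continuous f x -> f x <> 0 -> continuous (fun y => / f y) x.
Proof. intros; apply continuous_Rinv_comp; auto. Qed.
Lemma cR_div (f g : R -> R) x : continuous f x -> continuous g x -> g x <> 0 -> continuous (fun y => f y / g y) x.
Proof. intros; unfold Rdiv; apply cR_mult; auto; apply cR_inv; auto. Qed.
Lemma cR_abs (f : R -> R) x : continuous f x -> continuous (fun y => Rabs (f y)) x.
Proof. intros; apply continuous_Rabs_comp; auto. Qed.
Lemma cR_minus (f g : R -> R) x : continuous f x -> continuous g x -> continuous (fun y => f y - g y) x.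
Proof. intros; apply (continuous_minus f g); auto. Qed.
Lemma cR_const (c x : R) : continuous (fun _ : R => c) x.
Proof. apply continuous_const. Qed.
Lemma cR_pow2 (f : R -> R) x : continuous f x -> continuous (fun y => f y ^ 2) x.
Proof. intros. apply (continuous_ext (fun y => f y * f y)). intros; simpl; ring. apply cR_mult; auto. Qed.

Lemma cR_opp (f : R -> R) x : continuous f x -> continuous (fun y => - f y) x.
Proof. intros; apply (continuous_opp f); auto. Qed.
Ltac cont := repeat match goal with
 | |- continuous (fun _ => ?c) _ => apply cR_const
 | |- continuous (fun y => _ + _) _ => apply cR_plus
 | |- continuous (fun y => _ - _) _ => apply cR_minus
 | |- continuous (fun y => - _) _ => apply cR_opp
 | |- continuous (fun y => _ * _) _ => apply cR_mult
 | |- continuous (fun y => _ / _) _ => apply cR_div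
 | |- continuous (fun y => Rabs _) _ => apply cR_abs
 | |- continuous (fun y => _ ^ 2) _ => apply cR_pow2
 | |- continuous (fun y => cos _) _ => apply continuous_cos_comp
 | |- continuous (fun y => sin _) _ => apply continuous_sin_comp
 | |- continuous (fun y => atan _) _ => apply continuous_atan_comp
 | |- continuous _ _ => assumption
 | H : forall t, continuous ?f t |- continuous ?f _ => apply H
 | |- continuous (fun y => ?f y) _ => progress (change (fun y => f y) with f)
end.

Lemma d_eq (f : R -> R) x l l' : is_derive f x l -> l = l' -> is_derive f x l'.
Proof. intros H ->; exact H. Qed.
Lemma d_mult (f g : R -> R) x df dg : is_derive f x df -> is_derive g x dg ->
  is_derive (fun y => f y * g y) x (df * g x + f x * dg).
Proof. intros. apply (is_derive_mult f g); auto. intros; apply Rmult_comm. Qed.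
Lemma d_plus (f g : R -> R) x df dg : is_derive f x df -> is_derive g x dg ->
  is_derive (fun y => f y + g y) x (df + dg).
Proof. intros. apply (is_derive_plus f g); auto. Qed.
Lemma d_sin (f : R -> R) x df : is_derive f x df -> is_derive (fun y => sin (f y)) x (df * cos (f x)).
Proof. intros. apply (is_derive_comp sin f); auto. apply is_derive_sin. Qed.
Lemma d_atan (f : R -> R) x df : is_derive f x df -> is_derive (fun y => atan (f y)) x (df * / (1 + (f x)²)).
Proof. intros. apply (is_derive_comp atan f); auto. apply is_derive_atan. Qed.
Lemma d_const (c x : R) : is_derive (fun _ => c) x 0.
Proof. apply (is_derive_const (K:=R_AbsRing) (V:=R_NormedModule)). Qed.
Lemma d_pow2 (f : R -> R) x df : is_derive f x df -> is_derive (fun y => f y ^ 2) x (2 * df * f x).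
Proof. intros. replace (2 * df * f x) with (INR 2 * df * f x ^ Init.Nat.pred 2) by (simpl; ring). apply (is_derive_pow f 2); auto. Qed.
Lemma d_div (f g : R -> R) x df dg : is_derive f x df -> is_derive g x dg -> g x <> 0 ->
  is_derive (fun t => f t / g t) x ((df * g x - f x * dg) / g x ^ 2).
Proof. apply is_derive_div. Qed.

Lemma d_cont (f : R -> R) x l : is_derive f x l -> continuous f x.
Proof. intros H. apply (ex_derive_continuous (K:=R_AbsRing) (V:=R_NormedModule)). exists l; exact H. Qed.

Lemma bnd1 (a p q d : R) : 0 < d -> Rabs (sin a * (p * (d^2 - q^2) / (q^2+d^2)^2)) <= Rabs p / (q^2+d^2).
Proof.
  intros Hd. assert (HD : 0 < q^2+d^2) by nra.
  assert (Hs : Rabs (sin a) <= 1) by (apply Rabs_le; apply SIN_bound).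
  assert (Hq : Rabs (d^2-q^2) <= q^2+d^2) by (apply Rabs_le; nra).
  rewrite Rabs_mult. unfold Rdiv. rewrite !Rabs_mult.
  rewrite (Rabs_pos_eq (/ _)) by (apply Rlt_le, Rinv_0_lt_compat; nra).
  replace (/ (q^2+d^2)^2) with (/(q^2+d^2) * /(q^2+d^2)) by (field; lra).
  assert (0 <= Rabs p) by apply Rabs_pos. assert (0 <= Rabs (sin a)) by apply Rabs_pos.
  assert (0 < /(q^2+d^2)) by (apply Rinv_0_lt_compat; lra).
  assert (Rabs (d^2-q^2) * /(q^2+d^2) <= 1).
  { apply (Rmult_le_reg_r (q^2+d^2)); auto. rewrite Rmult_assoc, Rinv_l by lra. lra. }
  assert (0 <= Rabs (d^2-q^2)) by apply Rabs_pos.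
  assert (0 <= Rabs (d^2-q^2) * /(q^2+d^2)) by nra.
  replace (Rabs (sin a) * (Rabs p * Rabs (d ^ 2 - q ^ 2) * (/ (q ^ 2 + d ^ 2) * / (q ^ 2 + d ^ 2))))
   with ((Rabs (sin a) * (Rabs (d ^ 2 - q ^ 2) * / (q ^ 2 + d ^ 2))) * (Rabs p * / (q^2+d^2))) by ring.
  assert (0 <= Rabs p * / (q^2+d^2)) by nra.
  assert (Rabs (sin a) * (Rabs (d ^ 2 - q ^ 2) * / (q ^ 2 + d ^ 2)) <= 1) by nra.
  nra.
Qed.
Lemma bnd2 (a q d : R) : 0 < d -> Rabs (cos a * (d^2 / (q^2+d^2))) <= d^2 / (q^2+d^2).
Proof.
  intros Hd. assert (HD : 0 < q^2+d^2) by nra.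
  assert (Hs : Rabs (cos a) <= 1) by (apply Rabs_le; apply COS_bound).
  assert (0 <= d^2/(q^2+d^2)) by (unfold Rdiv; apply Rmult_le_pos; [nra| apply Rlt_le, Rinv_0_lt_compat; nra]).
  rewrite Rabs_mult, (Rabs_pos_eq (d^2/_)) by auto.
  assert (0 <= Rabs (cos a)) by apply Rabs_pos. nra.
Qed.
Lemma bnd3 (a q d : R) : 0 < d -> Rabs (sin a * (q / (q^2+d^2))) <= / (2 * d).
Proof.
  intros Hd. assert (HD : 0 < q^2+d^2) by nra.
  assert (Hs : Rabs (sin a) <= 1) by (apply Rabs_le; apply SIN_bound).
  rewrite Rabs_mult. unfold Rdiv. rewrite Rabs_mult, (Rabs_pos_eq (/ _)) by (apply Rlt_le, Rinv_0_lt_compat; nra).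
  assert (Rabs q * / (q^2+d^2) <= / (2*d)).
  { apply (Rmult_le_reg_r ((q^2+d^2)*(2*d))). nra.
    replace (Rabs q * / (q ^ 2 + d ^ 2) * ((q ^ 2 + d ^ 2) * (2 * d))) with (Rabs q * (2*d)) by (field; lra).
    replace (/ (2 * d) * ((q ^ 2 + d ^ 2) * (2 * d))) with (q^2+d^2) by (field; lra).
    rewrite <- (pow2_abs q). pose proof (pow2_ge_0 (Rabs q - d)). nra. }
  assert (0 <= Rabs q * / (q^2+d^2)) by (apply Rmult_le_pos; [apply Rabs_pos| apply Rlt_le, Rinv_0_lt_compat; lra]).
  eapply Rle_trans with (1 * (Rabs q * / (q^2+d^2))); [apply Rmult_le_compat_r; auto | lra].
Qed.

Lemma exR (f : R -> R) a b : (forall z, Rmin a b <= z <= Rmax a b -> continuous f z) -> ex_RInt f a b.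
Proof. apply (ex_RInt_continuous (V:=R_CompleteNormedModule)). Qed.
Ltac req := match goal with |- ?a = ?b => change (@eq R a b) end.

Lemma gen (phi phi1 phi2 : R -> R) (s u d : R) :
  s <= u -> 0 < d ->
  (forall t, is_derive phi t (phi1 t)) -> (forall t, is_derive phi1 t (phi2 t)) ->
  (forall t, continuous phi2 t) ->
  Rabs (RInt (fun t => cos (phi t)) s u) <=
  1 / d + RInt (fun t => Rabs (phi2 t) / (phi1 t ^ 2 + d ^ 2)) s u
        + RInt (fun t => d ^ 2 / (phi1 t ^ 2 + d ^ 2)) s u.
Proof.
  intros Hsu Hd D0 D1 C2.
  assert (C0 : forall t, continuous phi t) by (intro t; eapply d_cont; apply D0).
  assert (C1 : forall t, continuous phi1 t) by (intro t; eapply d_cont; apply D1).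
  assert (Dpos : forall t, phi1 t ^ 2 + d ^ 2 <> 0) by (intro t; nra).
  set (W := fun t => phi1 t / (phi1 t ^ 2 + d ^ 2)).
  set (W' := fun t => phi2 t * (d ^ 2 - phi1 t ^ 2) / (phi1 t ^ 2 + d ^ 2) ^ 2).
  set (F := fun t => sin (phi t) * W t).
  set (F' := fun t => cos (phi t) * phi1 t * W t + sin (phi t) * W' t).
  assert (DF : forall t, is_derive F t (F' t)).
  { intro t. unfold F, F', W, W'.
    eapply d_eq. apply d_mult. apply d_sin, D0. apply d_div. apply D1.
    apply d_plus. apply d_pow2, D1. apply d_const. apply Dpos.
    cbv beta. req. field. apply Dpos. }
  assert (CF : forall t, continuous F' t).
  { intro t. unfold F', W, W'. cont; auto. all: try apply pow_nonzero; try apply Dpos. }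
  assert (IF : is_RInt F' s u (F u - F s)).
  { apply (is_RInt_derive F F'); intros; auto. }
  assert (E1 : ex_RInt (fun t => cos (phi t) * phi1 t * W t) s u).
  { apply exR; intros; unfold W; cont; try apply pow_nonzero; try apply Dpos. }
  assert (E2 : ex_RInt (fun t => sin (phi t) * W' t) s u).
  { apply exR; intros; unfold W'; cont; try apply pow_nonzero; try apply Dpos. }
  assert (E3 : ex_RInt (fun t => cos (phi t) * (d ^ 2 / (phi1 t ^ 2 + d ^ 2))) s u).
  { apply exR; intros; cont; try apply pow_nonzero; try apply Dpos. }
  assert (E4 : ex_RInt (fun t => Rabs (phi2 t) / (phi1 t ^ 2 + d ^ 2)) s u).
  { apply exR; intros; cont; try apply pow_nonzero; try apply Dpos. }
  assert (E5 : ex_RInt (fun t => d ^ 2 / (phi1 t ^ 2 + d ^ 2)) s u).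
  { apply exR; intros; cont; try apply pow_nonzero; try apply Dpos. }
  assert (Eq1 : RInt (fun t => cos (phi t)) s u =
     RInt (fun t => cos (phi t) * phi1 t * W t) s u + RInt (fun t => cos (phi t) * (d ^ 2 / (phi1 t ^ 2 + d ^ 2))) s u).
  { etransitivity; [| exact (RInt_plus _ _ _ _ E1 E3)]. apply RInt_ext. intros x _. unfold W, plus; cbn -[pow]. req.
    field. apply Dpos. }
  assert (Eq2 : F u - F s = RInt (fun t => cos (phi t) * phi1 t * W t) s u + RInt (fun t => sin (phi t) * W' t) s u).
  { rewrite <- (is_RInt_unique _ _ _ _ IF). etransitivity; [| exact (RInt_plus _ _ _ _ E1 E2)]. apply RInt_ext. intros x _. unfold F', plus; simpl. reflexivity. }
  assert (B2 : Rabs (RInt (fun t => sin (phi t) * W' t) s u) <= RInt (fun t => Rabs (phi2 t) / (phi1 t ^ 2 + d ^ 2)) s u).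
  { eapply Rle_trans. apply abs_RInt_le; auto. apply RInt_le; auto.
    apply exR; intros; unfold W'; cont; try apply pow_nonzero; try apply Dpos.
    intros x _. unfold W'. apply bnd1; auto. }
  assert (B3 : Rabs (RInt (fun t => cos (phi t) * (d ^ 2 / (phi1 t ^ 2 + d ^ 2))) s u) <= RInt (fun t => d ^ 2 / (phi1 t ^ 2 + d ^ 2)) s u).
  { eapply Rle_trans. apply abs_RInt_le; auto. apply RInt_le; auto.
    apply exR; intros; cont; try apply pow_nonzero; try apply Dpos.
    intros x _. apply bnd2; auto. }
  assert (BF : forall x, Rabs (F x) <= / (2 * d)) by (intro x; unfold F, W; apply bnd3; auto).
  rewrite Eq1. 
  assert (Rabs (F u - F s) <= / d).
  { eapply Rle_trans. apply Rabs_triang. rewrite Rabs_Ropp. pose proof (BF u); pose proof (BF s).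
    replace (/ d) with (/ (2*d) + / (2*d)) by (field; lra). lra. }
  replace (RInt (fun t => cos (phi t) * phi1 t * W t) s u) with (F u - F s - RInt (fun t => sin (phi t) * W' t) s u) by lra.
  eapply Rle_trans. apply Rabs_triang. eapply Rle_trans. apply Rplus_le_compat_r. apply Rabs_triang. rewrite Rabs_Ropp.
  unfold Rdiv; rewrite Rmult_1_l. lra.
Qed.

Lemma caseA (phi phi1 phi2 : R -> R) (s u A B d : R) :
  s <= u -> u - s <= 1 -> 0 < A -> 0 < d ->
  (forall t, is_derive phi t (phi1 t)) -> (forall t, is_derive phi1 t (phi2 t)) ->
  (forall t, continuous phi2 t) ->
  (forall t, s <= t <= u -> A <= Rabs (phi1 t)) ->
  (forall t, s <= t <= u -> Rabs (phi2 t) <= B) ->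
  Rabs (RInt (fun t => cos (phi t)) s u) <= 1 / d + B / A ^ 2 + d ^ 2 / A ^ 2.
Proof.
  intros Hsu H1 HA Hd D0 D1 C2 HA1 HB2.
  assert (C1 : forall t, continuous phi1 t) by (intro t; eapply d_cont; apply D1).
  assert (Dpos : forall t, phi1 t ^ 2 + d ^ 2 <> 0) by (intro t; nra).
  assert (HB : 0 <= B) by (eapply Rle_trans; [apply Rabs_pos | apply (HB2 s); lra]).
  eapply Rle_trans. apply (gen phi phi1 phi2 s u d); auto.
  assert (Hsq : forall t, s <= t <= u -> A ^ 2 <= phi1 t ^ 2).
  { intros t Ht. rewrite <- (pow2_abs (phi1 t)). pose proof (HA1 t Ht). nra. }
  assert (R1 : RInt (fun t => Rabs (phi2 t) / (phi1 t ^ 2 + d ^ 2)) s u <= B / A ^ 2).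
  { eapply Rle_trans. apply (RInt_le _ (fun _ => B / A ^ 2)); auto.
    apply exR; intros; cont; try apply pow_nonzero; try apply Dpos.
    apply exR; intros; cont.
    intros x Hx. unfold Rdiv. apply Rmult_le_compat. apply Rabs_pos.
    apply Rlt_le, Rinv_0_lt_compat. nra. apply HB2; lra.
    apply Rinv_le_contravar. nra. pose proof (Hsq x ltac:(lra)). nra.
    rewrite RInt_const. change (scal (u - s) (B / A ^ 2)) with ((u - s) * (B / A ^ 2)).
    assert (0 <= B / A ^ 2) by (unfold Rdiv; apply Rmult_le_pos; auto; apply Rlt_le, Rinv_0_lt_compat; nra).
    nra. }
  assert (R2 : RInt (fun t => d ^ 2 / (phi1 t ^ 2 + d ^ 2)) s u <= d ^ 2 / A ^ 2).
  { eapply Rle_trans. apply (RInt_le _ (fun _ => d ^ 2 / A ^ 2)); auto.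
    apply exR; intros; cont; try apply pow_nonzero; try apply Dpos.
    apply exR; intros; cont.
    intros x Hx. unfold Rdiv. apply Rmult_le_compat. nra.
    apply Rlt_le, Rinv_0_lt_compat. nra. lra.
    apply Rinv_le_contravar. nra. pose proof (Hsq x ltac:(lra)). nra.
    rewrite RInt_const. change (scal (u - s) (d ^ 2 / A ^ 2)) with ((u - s) * (d ^ 2 / A ^ 2)).
    assert (0 <= d ^ 2 / A ^ 2) by (unfold Rdiv; apply Rmult_le_pos; [nra|]; apply Rlt_le, Rinv_0_lt_compat; nra).
    nra. }
  lra.
Qed.

Lemma caseB (phi phi1 phi2 : R -> R) (s u m d : R) :
  s <= u -> 0 < m -> 0 < d ->
  (forall t, is_derive phi t (phi1 t)) -> (forall t, is_derive phi1 t (phi2 t)) ->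
  (forall t, continuous phi2 t) ->
  (forall t, s <= t <= u -> m <= phi2 t) ->
  Rabs (RInt (fun t => cos (phi t)) s u) <= (1 + PI) / d + PI * d / m.
Proof.
  intros Hsu Hm Hd D0 D1 C2 Hm2.
  assert (C1 : forall t, continuous phi1 t) by (intro t; eapply d_cont; apply D1).
  assert (Dpos : forall t, phi1 t ^ 2 + d ^ 2 <> 0) by (intro t; nra).
  eapply Rle_trans. apply (gen phi phi1 phi2 s u d); auto.
  set (G := fun t => atan (phi1 t / d) / d).
  assert (IG : is_RInt (fun t => phi2 t / (phi1 t ^ 2 + d ^ 2)) s u (G u - G s)).
  { apply (is_RInt_derive G (fun t => phi2 t / (phi1 t ^ 2 + d ^ 2))).
    - intros x _. unfold G. eapply d_eq. apply d_div. apply d_atan. apply d_div. apply D1. apply d_const. lra.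
      apply d_const. lra. unfold Rsqr. req. field. split; auto. lra.
    - intros x _. cont. apply Dpos. }
  assert (HG : G u - G s <= PI / d).
  { unfold G. pose proof (atan_bound (phi1 u / d)). pose proof (atan_bound (phi1 s / d)).
    replace (atan (phi1 u / d) / d - atan (phi1 s / d) / d) with ((atan (phi1 u / d) - atan (phi1 s / d)) * / d) by (field; lra).
    unfold Rdiv at 2. apply Rmult_le_compat_r. apply Rlt_le, Rinv_0_lt_compat; lra. lra. }
  assert (EI : RInt (fun t => Rabs (phi2 t) / (phi1 t ^ 2 + d ^ 2)) s u = G u - G s).
  { rewrite <- (is_RInt_unique _ _ _ _ IG). apply RInt_ext. intros x Hx.
    rewrite Rmin_left, Rmax_right in Hx by lra. rewrite Rabs_pos_eq; auto. pose proof (Hm2 x ltac:(lra)). lra. }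
  assert (R2 : RInt (fun t => d ^ 2 / (phi1 t ^ 2 + d ^ 2)) s u <= d ^ 2 / m * (G u - G s)).
  { rewrite <- (is_RInt_unique _ _ _ _ IG).
    assert (EX : ex_RInt (fun t => phi2 t / (phi1 t ^ 2 + d ^ 2)) s u) by (eexists; exact IG).
    rewrite <- (RInt_scal _ _ _ _ EX).
    apply RInt_le; auto. apply exR; intros; cont; try apply Dpos.
    apply exR; intros. apply (continuous_scal_r (K:=R_AbsRing) (V:=R_NormedModule)). cont. apply Dpos.
    intros x Hx. change (scal (d^2/m) (phi2 x / (phi1 x ^ 2 + d ^ 2))) with (d^2/m * (phi2 x / (phi1 x ^ 2 + d ^ 2))).
    pose proof (Hm2 x ltac:(lra)).
    assert (0 < phi1 x ^ 2 + d ^ 2) by nra.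
    replace (d^2/m * (phi2 x / (phi1 x ^ 2 + d ^ 2))) with ((d^2/(phi1 x ^ 2 + d ^ 2)) * (phi2 x / m)) by (field; lra).
    assert (1 <= phi2 x / m). { apply (Rmult_le_reg_r m); auto. unfold Rdiv; rewrite Rmult_assoc, Rinv_l; lra. }
    assert (0 <= d^2/(phi1 x ^ 2 + d ^ 2)) by (unfold Rdiv; apply Rmult_le_pos; [nra|]; apply Rlt_le, Rinv_0_lt_compat; lra).
    nra. }
  rewrite EI.
  assert (d ^ 2 / m * (G u - G s) <= d ^ 2 / m * (PI / d)).
  { apply Rmult_le_compat_l; auto. unfold Rdiv; apply Rmult_le_pos; [nra|]; apply Rlt_le, Rinv_0_lt_compat; lra. }
  replace (d ^ 2 / m * (PI / d)) with (PI * d / m) in H by (field; lra).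
  replace ((1 + PI) / d) with (1/d + PI / d) by (field; lra). lra.
Qed.

Lemma mvt_bound (f df : R -> R) (s u M : R) :
  (forall t, is_derive f t (df t)) -> (forall t, s <= t <= u -> Rabs (df t) <= M) ->
  forall x y, s <= x <= u -> s <= y <= u -> Rabs (f x - f y) <= M * Rabs (x - y).
Proof.
  intros D B x y Hx Hy.
  destruct (MVT_gen f y x df) as [c [Hc E]].
  - intros; apply D.
  - intros z _. apply continuity_pt_filterlim. eapply d_cont. apply D.
  - rewrite E, Rabs_mult. apply Rmult_le_compat_r. apply Rabs_pos. apply B.
    split; [apply Rle_trans with (Rmin y x) | apply Rle_trans with (Rmax y x)]; try tauto.
    apply Rmin_glb; lra. apply Rmax_lub; lra.
Qed.

Lemma divr2 (c r : R) : 1 <= r -> 0 <= c -> c / r ^ 2 <= c / r.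
Proof.
  intros Hr Hc. unfold Rdiv. apply Rmult_le_compat_l; auto. apply Rinv_le_contravar; nra.
Qed.

Lemma piece1D (phi phi1 phi2 phi3 : R -> R) (r kap M2 M3 l s u : R) :
  (forall t, is_derive phi t (phi1 t)) -> (forall t, is_derive phi1 t (phi2 t)) ->
  (forall t, is_derive phi2 t (phi3 t)) ->
  1 <= r -> 0 < kap -> 0 <= M2 -> 0 <= M3 -> 0 < l -> l * M2 <= 1/5 -> l * M3 <= kap / 5 ->
  (forall t, 0 <= t <= 1 -> Rabs (phi2 t) <= M2 * r ^ 2) ->
  (forall t, 0 <= t <= 1 -> Rabs (phi3 t) <= M3 * r ^ 2) ->
  (forall t, 0 < t < 1 -> (r ^ 2) ^ 2 / 2 <= phi1 t ^ 2 \/ kap ^ 2 * (r ^ 2) ^ 2 / 2 <= phi2 t ^ 2) ->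
  0 <= s -> s < u -> u <= 1 -> u - s <= l ->
  Rabs (RInt (fun t => cos (phi t)) s u) <= (5 + 4 * M2 + PI + 2 * PI / kap) / r.
Proof.
  intros D0 D1 D2 Hr Hk HM2 HM3 Hl Hl2 Hl3 B2 B3 Dich Hs Hsu Hu Hul.
  set (a := r ^ 2). assert (Ha : 1 <= a) by (unfold a; nra).
  set (t0 := (s + u) / 2).
  assert (C2 : forall t, continuous phi2 t) by (intro t; eapply d_cont; apply D2).
  assert (Ht0 : s <= t0 <= u) by (unfold t0; lra).
  assert (K0 : 0 <= PI / kap) by (unfold Rdiv; apply Rmult_le_pos; [pose proof PI_RGT_0; lra | apply Rlt_le, Rinv_0_lt_compat; lra]).
  assert (Hpi := PI_RGT_0).
  destruct (Dich t0) as [HA | HB]; [unfold t0; lra| |].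
  -
    assert (H7 : 7 / 10 * a <= Rabs (phi1 t0)).
    { rewrite <- (pow2_abs (phi1 t0)) in HA. fold a in HA. pose proof (Rabs_pos (phi1 t0)). nra. }
    assert (HV : forall t, s <= t <= u -> a / 2 <= Rabs (phi1 t)).
    { intros t Ht. pose proof (mvt_bound phi1 phi2 s u (M2 * a) D1 ltac:(intros; apply B2; lra) t t0 Ht Ht0) as HM.
      assert (Rabs (t - t0) <= l) by (apply Rabs_le; lra).
      assert (M2 * Rabs (t - t0) <= 1 / 5) by (pose proof (Rabs_pos (t - t0)); nra).
      assert (M2 * a * Rabs (t - t0) <= a / 5) by nra.
      pose proof (Rabs_triang_inv (phi1 t0) (phi1 t)). rewrite Rabs_minus_sym in HM. lra. }
    eapply Rle_trans. apply (caseA phi phi1 phi2 s u (a / 2) (M2 * a) r); auto; try lra.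
    intros; apply B2; lra.
    unfold a. replace ((M2 * r ^ 2) / (r ^ 2 / 2) ^ 2) with (4 * M2 / r ^ 2) by (field; lra).
    replace (r ^ 2 / (r ^ 2 / 2) ^ 2) with (4 / r ^ 2) by (field; lra).
    pose proof (divr2 (4 * M2) r Hr ltac:(lra)). pose proof (divr2 4 r Hr ltac:(lra)).
    assert ((5 + 4 * M2 + PI + 2 * PI / kap) / r = 1 / r + 4 * M2 / r + 4 / r + (PI + 2 * (PI / kap)) / r) by (field; lra).
    assert (0 <= (PI + 2 * (PI / kap)) / r) by (unfold Rdiv; apply Rmult_le_pos; [lra | apply Rlt_le, Rinv_0_lt_compat; lra]).
    lra.
  -
    assert (H7 : 7 / 10 * (kap * a) <= Rabs (phi2 t0)).
    { rewrite <- (pow2_abs (phi2 t0)) in HB. fold a in HB. pose proof (Rabs_pos (phi2 t0)). assert (0 < kap * a) by nra. nra. }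
    assert (HV : forall t, s <= t <= u -> Rabs (phi2 t - phi2 t0) <= kap * a / 5).
    { intros t Ht. pose proof (mvt_bound phi2 phi3 s u (M3 * a) D2 ltac:(intros; apply B3; lra) t t0 Ht Ht0) as HM.
      assert (Rabs (t - t0) <= l) by (apply Rabs_le; lra).
      assert (M3 * Rabs (t - t0) <= kap / 5) by (pose proof (Rabs_pos (t - t0)); nra).
      assert (M3 * a * Rabs (t - t0) <= kap * a / 5) by nra.
      lra. }
    assert (Hfin : (1 + PI) / r + PI * r / (kap * a / 2) <= (5 + 4 * M2 + PI + 2 * PI / kap) / r).
    { unfold a. replace (PI * r / (kap * r ^ 2 / 2)) with (2 * PI / kap / r) by (field; lra).
      assert ((5 + 4 * M2 + PI + 2 * PI / kap) / r = (1 + PI) / r + 2 * PI / kap / r + (4 + 4 * M2) / r) by (field; lra).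
      assert (0 <= (4 + 4 * M2) / r) by (unfold Rdiv; apply Rmult_le_pos; [lra | apply Rlt_le, Rinv_0_lt_compat; lra]).
      lra. }
    destruct (Rle_or_lt 0 (phi2 t0)) as [Hp | Hn].
    + rewrite Rabs_pos_eq in H7 by auto.
      eapply Rle_trans; [| exact Hfin]. apply (caseB phi phi1 phi2 s u (kap * a / 2) r); auto; try lra.
      nra. intros t Ht. pose proof (HV t Ht) as Hv. apply Rabs_le_between in Hv. lra.
    + rewrite Rabs_left in H7 by auto.
      eapply Rle_trans; [| exact Hfin].
      replace (RInt (fun t => cos (phi t)) s u) with (RInt (fun t => cos ((fun t => - phi t) t)) s u)
        by (apply RInt_ext; intros; simpl; rewrite cos_neg; reflexivity).
      apply (caseB (fun t => - phi t) (fun t => - phi1 t) (fun t => - phi2 t) s u (kap * a / 2) r); auto; try lra.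
      nra. intro t. apply (is_derive_opp phi). apply D0.
      intro t. apply (is_derive_opp phi1). apply D1.
      intro t. apply (continuous_opp phi2). auto.
      intros t Ht. pose proof (HV t Ht) as Hv. apply Rabs_le_between in Hv. lra.
Qed.

Lemma glue (phi phi1 phi2 phi3 : R -> R) (r kap M2 M3 l : R) :
  (forall t, is_derive phi t (phi1 t)) -> (forall t, is_derive phi1 t (phi2 t)) ->
  (forall t, is_derive phi2 t (phi3 t)) ->
  1 <= r -> 0 < kap -> 0 <= M2 -> 0 <= M3 -> 0 < l -> l * M2 <= 1/5 -> l * M3 <= kap / 5 ->
  (forall t, 0 <= t <= 1 -> Rabs (phi2 t) <= M2 * r ^ 2) ->
  (forall t, 0 <= t <= 1 -> Rabs (phi3 t) <= M3 * r ^ 2) ->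
  (forall t, 0 < t < 1 -> (r ^ 2) ^ 2 / 2 <= phi1 t ^ 2 \/ kap ^ 2 * (r ^ 2) ^ 2 / 2 <= phi2 t ^ 2) ->
  forall k : nat, forall s u, 0 <= s -> s <= u -> u <= 1 -> u - s <= INR k * l ->
  Rabs (RInt (fun t => cos (phi t)) s u) <= INR k * ((5 + 4 * M2 + PI + 2 * PI / kap) / r).
Proof.
  intros D0 D1 D2 Hr Hk HM2 HM3 Hl Hl2 Hl3 B2 B3 Dich.
  set (K1 := (5 + 4 * M2 + PI + 2 * PI / kap) / r).
  assert (HK1 : 0 <= K1).
  { unfold K1. assert (0 <= PI / kap) by (unfold Rdiv; apply Rmult_le_pos; [pose proof PI_RGT_0; lra | apply Rlt_le, Rinv_0_lt_compat; lra]).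
    pose proof PI_RGT_0. unfold Rdiv at 1. apply Rmult_le_pos; [lra | apply Rlt_le, Rinv_0_lt_compat; lra]. }
  assert (C0 : forall t, continuous phi t) by (intro t; eapply d_cont; apply D0).
  assert (EX : forall a b, ex_RInt (fun t => cos (phi t)) a b) by (intros; apply exR; intros; cont).
  induction k as [|k IH]; intros s u Hs Hsu Hu Hl'.
  - simpl in Hl'. assert (u = s) by lra. subst u. rewrite RInt_point. unfold zero; simpl. rewrite Rabs_R0. simpl; lra.
  - rewrite S_INR in *. pose proof (pos_INR k).
    destruct (Rle_or_lt (u - s) l) as [Hsh | Hlong].
    + destruct (Req_dec s u) as [<- | Hne].
      * rewrite RInt_point. unfold zero; simpl. rewrite Rabs_R0. nra.
      * eapply Rle_trans. apply (piece1D phi phi1 phi2 phi3 r kap M2 M3 l s u); auto; lra.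
        fold K1. nra.
    + set (v := s + l).
      rewrite <- (RInt_Chasles _ s v u (EX s v) (EX v u)).
      eapply Rle_trans. apply Rabs_triang.
      assert (Rabs (RInt (fun t => cos (phi t)) s v) <= K1).
      { apply (piece1D phi phi1 phi2 phi3 r kap M2 M3 l s v); auto; unfold v; lra. }
      assert (Rabs (RInt (fun t => cos (phi t)) v u) <= INR k * K1).
      { apply IH; unfold v; lra. }
      change (plus ?x ?y) with (x + y). lra.
Qed.

Lemma dich_alg (v1 v2 w1 w2 x1 x2 kap : R) :
  v1 ^ 2 + v2 ^ 2 = 1 -> v1 * w1 + v2 * w2 = 0 -> 0 < kap -> kap ^ 2 <= w1 ^ 2 + w2 ^ 2 ->
  (x1 ^ 2 + x2 ^ 2) / 2 <= (x1 * v1 + x2 * v2) ^ 2 \/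
  kap ^ 2 * (x1 ^ 2 + x2 ^ 2) / 2 <= (x1 * w1 + x2 * w2) ^ 2.
Proof.
  intros H1 H2 Hk Hw.
  set (k := v1 * w2 - v2 * w1).
  assert (E1 : w1 + k * v2 = w1 * (1 - (v1 ^ 2 + v2 ^ 2)) + v1 * (v1 * w1 + v2 * w2)) by (unfold k; ring).
  assert (E2 : w2 - k * v1 = w2 * (1 - (v1 ^ 2 + v2 ^ 2)) + v2 * (v1 * w1 + v2 * w2)) by (unfold k; ring).
  rewrite H1, H2 in E1, E2.
  assert (W1 : w1 = - k * v2) by lra. assert (W2 : w2 = k * v1) by lra.
  assert (Hkk : w1 ^ 2 + w2 ^ 2 = k ^ 2) by (rewrite W1, W2; replace (k^2) with (k^2 * (v1^2+v2^2)) by (rewrite H1; ring); ring).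
  assert (Ex : x1 * w1 + x2 * w2 = k * (x2 * v1 - x1 * v2)) by (rewrite W1, W2; ring).
  assert (Lg : (x1 * v1 + x2 * v2) ^ 2 + (x2 * v1 - x1 * v2) ^ 2 = x1 ^ 2 + x2 ^ 2).
  { replace (x1 ^ 2 + x2 ^ 2) with ((x1 ^ 2 + x2 ^ 2) * (v1 ^ 2 + v2 ^ 2)) by (rewrite H1; ring). ring. }
  destruct (Rle_or_lt ((x1 ^ 2 + x2 ^ 2) / 2) ((x1 * v1 + x2 * v2) ^ 2)) as [h | h]; [left; auto | right].
  rewrite Ex. rewrite Hkk in Hw.
  assert ((x1 ^ 2 + x2 ^ 2) / 2 <= (x2 * v1 - x1 * v2) ^ 2) by lra.
  replace ((k * (x2 * v1 - x1 * v2)) ^ 2) with (k ^ 2 * (x2 * v1 - x1 * v2) ^ 2) by ring.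
  assert (0 <= (x1 ^ 2 + x2 ^ 2) / 2) by nra.
  replace (kap ^ 2 * (x1 ^ 2 + x2 ^ 2) / 2) with (kap ^ 2 * ((x1 ^ 2 + x2 ^ 2) / 2)) by field.
  apply Rmult_le_compat; auto. nra.
Qed.

Lemma ortho (d1 d2 e1 e2 : R -> R) t0 :
  (forall t, is_derive d1 t (e1 t)) -> (forall t, is_derive d2 t (e2 t)) ->
  (forall t, 0 <= t <= 1 -> d1 t ^ 2 + d2 t ^ 2 = 1) -> 0 < t0 < 1 ->
  d1 t0 * e1 t0 + d2 t0 * e2 t0 = 0.
Proof.
  intros D1 D2 U Ht.
  assert (H1 : is_derive (fun t => d1 t ^ 2 + d2 t ^ 2) t0 (2 * e1 t0 * d1 t0 + 2 * e2 t0 * d2 t0)).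
  { apply d_plus; apply d_pow2; auto. }
  assert (H2 : is_derive (fun t => d1 t ^ 2 + d2 t ^ 2) t0 0).
  { apply (is_derive_ext_loc (fun _ => 1)). 
    assert (He : 0 < Rmin t0 (1 - t0)) by (apply Rmin_glb_lt; lra).
    exists (mkposreal _ He). intros y Hy. change (Rabs (y - t0) < Rmin t0 (1 - t0)) in Hy.
    apply Rabs_def2 in Hy. pose proof (Rmin_l t0 (1 - t0)). pose proof (Rmin_r t0 (1 - t0)).
    symmetry. apply U. lra.
    apply d_const. }
  apply is_derive_unique in H1. apply is_derive_unique in H2. rewrite H1 in H2. lra.
Qed.

Lemma d_lin (f1 f2 df1 df2 : R -> R) (P x1 x2 c t : R) :
  is_derive f1 t (df1 t) -> is_derive f2 t (df2 t) ->
  is_derive (fun t => P * (x1 * f1 t + x2 * f2 t) + c) t (P * (x1 * df1 t + x2 * df2 t)).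
Proof.
  intros H1 H2. eapply d_eq. apply d_plus. apply d_mult. apply d_const. apply d_plus.
  apply d_mult. apply d_const. apply H1. apply d_mult. apply d_const. apply H2. apply d_const. cbv beta. req. ring.
Qed.
Lemma d_lin0 (f1 f2 df1 df2 : R -> R) (P x1 x2 t : R) :
  is_derive f1 t (df1 t) -> is_derive f2 t (df2 t) ->
  is_derive (fun t => P * (x1 * f1 t + x2 * f2 t)) t (P * (x1 * df1 t + x2 * df2 t)).
Proof.
  intros H1 H2. eapply d_eq. apply d_mult. apply d_const. apply d_plus.
  apply d_mult. apply d_const. apply H1. apply d_mult. apply d_const. apply H2. cbv beta. req. ring.
Qed.

Lemma abs_le_norm (x1 x2 : R) : Rabs x1 <= sqrt (x1 ^ 2 + x2 ^ 2).
Proof.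
  rewrite <- (sqrt_pow2 (Rabs x1)) by apply Rabs_pos. rewrite pow2_abs.
  apply sqrt_le_1_alt. nra.
Qed.

Lemma lin_bound (x1 x2 a b : R) : Rabs (x1 * a + x2 * b) <= sqrt (x1 ^ 2 + x2 ^ 2) * (Rabs a + Rabs b).
Proof.
  pose proof (abs_le_norm x1 x2). pose proof (abs_le_norm x2 x1).
  replace (x2 ^ 2 + x1 ^ 2) with (x1 ^ 2 + x2 ^ 2) in H0 by ring.
  eapply Rle_trans. apply Rabs_triang. rewrite !Rabs_mult.
  pose proof (Rabs_pos a). pose proof (Rabs_pos b). nra.
Qed.

Lemma vdc (g1 g2 d1 d2 e1 e2 f1 f2 : R -> R) (kap : R) :
  (forall t, is_derive g1 t (d1 t)) -> (forall t, is_derive d1 t (e1 t)) ->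
  (forall t, is_derive e1 t (f1 t)) -> (forall t, continuous f1 t) ->
  (forall t, is_derive g2 t (d2 t)) -> (forall t, is_derive d2 t (e2 t)) ->
  (forall t, is_derive e2 t (f2 t)) -> (forall t, continuous f2 t) ->
  (forall t, 0 <= t <= 1 -> d1 t ^ 2 + d2 t ^ 2 = 1) -> 0 < kap ->
  (forall t, 0 <= t <= 1 -> kap <= sqrt (e1 t ^ 2 + e2 t ^ 2)) ->
  exists K, 1 <= K /\ forall x1 x2 c s u, 0 <= s -> s <= u -> u <= 1 -> 0 < x1 ^ 2 + x2 ^ 2 ->
    Rabs (RInt (fun t => cos (2 * PI * (x1 * g1 t + x2 * g2 t) + c)) s u)
      <= K / sqrt (sqrt (x1 ^ 2 + x2 ^ 2)).
Proof.
  intros G1 D1 E1 F1 G2 D2 E2 F2 U Hk Cu.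
  assert (CE1 : forall t, continuous e1 t) by (intro; eapply d_cont; apply E1).
  assert (CE2 : forall t, continuous e2 t) by (intro; eapply d_cont; apply E2).
  destruct (continuity_ab_maj (fun t => Rabs (e1 t) + Rabs (e2 t)) 0 1) as [m2 [Hm2 _]]. lra.
  { intros; apply continuity_pt_filterlim. apply (cR_plus (fun t => Rabs (e1 t)) (fun t => Rabs (e2 t))); cont. }
  destruct (continuity_ab_maj (fun t => Rabs (f1 t) + Rabs (f2 t)) 0 1) as [m3 [Hm3 _]]. lra.
  { intros; apply continuity_pt_filterlim. apply (cR_plus (fun t => Rabs (f1 t)) (fun t => Rabs (f2 t))); cont. }
  set (M2 := Rabs (e1 m2) + Rabs (e2 m2)) in *. set (M3 := Rabs (f1 m3) + Rabs (f2 m3)) in *.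
  assert (HM2 : 0 <= M2) by (unfold M2; pose proof (Rabs_pos (e1 m2)); pose proof (Rabs_pos (e2 m2)); lra).
  assert (HM3 : 0 <= M3) by (unfold M3; pose proof (Rabs_pos (f1 m3)); pose proof (Rabs_pos (f2 m3)); lra).
  assert (HM3k : 0 <= M3 / kap) by (unfold Rdiv; apply Rmult_le_pos; auto; apply Rlt_le, Rinv_0_lt_compat; lra).
  destruct (INR_archimed 1 (5 * M2 + 5 * (M3 / kap) + 1)) as [n Hn]. lra.
  rewrite Rmult_1_r in Hn.
  assert (Hn0 : 0 < INR n) by lra.
  set (l := / INR n).
  assert (Hl : 0 < l) by (apply Rinv_0_lt_compat; lra).
  assert (Hl2 : l * M2 <= 1 / 5).
  { unfold l. apply (Rmult_le_reg_l (INR n)); auto. rewrite <- Rmult_assoc, Rinv_r by lra. lra. }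
  assert (Hl3 : l * M3 <= kap / 5).
  { unfold l. apply (Rmult_le_reg_l (INR n)); auto. rewrite <- Rmult_assoc, Rinv_r by lra.
    assert (M3 = kap * (M3 / kap)) by (field; lra). assert (kap * (M3/kap) <= kap * (INR n / 5)).
    apply Rmult_le_compat_l; lra. lra. }
  set (K1 := 5 + 4 * M2 + PI + 2 * PI / kap).
  assert (HK1 : 0 <= K1).
  { unfold K1. assert (0 <= PI / kap) by (unfold Rdiv; apply Rmult_le_pos; [pose proof PI_RGT_0; lra | apply Rlt_le, Rinv_0_lt_compat; lra]).
    pose proof PI_RGT_0. lra. }
  exists (1 + INR n * K1). split. nra.
  intros x1 x2 c s u Hs Hsu Hu Hx.
  set (rho := sqrt (x1 ^ 2 + x2 ^ 2)).
  assert (Hrho : 0 < rho) by (apply sqrt_lt_R0; auto).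
  assert (Hsr : 0 < sqrt rho) by (apply sqrt_lt_R0; auto).
  set (P := 2 * PI). assert (HP : 6 < P) by (unfold P; pose proof PI2_3_2; lra).
  destruct (Rlt_or_le (P * rho) 1) as [Hsmall | Hbig].
  -
    assert (rho < 1) by nra.
    assert (sqrt rho < 1) by (rewrite <- sqrt_1; apply sqrt_lt_1_alt; lra).
    assert (Hb : Rabs (RInt (fun t => cos (2 * PI * (x1 * g1 t + x2 * g2 t) + c)) s u) <= 1).
    { assert (EX : ex_RInt (fun t => cos (2 * PI * (x1 * g1 t + x2 * g2 t) + c)) s u).
      { apply exR; intros. apply continuous_cos_comp. eapply d_cont. apply (d_lin g1 g2 d1 d2); auto. }
      eapply Rle_trans. apply abs_RInt_le; auto.
      eapply Rle_trans. apply (RInt_le _ (fun _ => 1)); auto.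
      apply exR; intros. apply cR_abs. apply continuous_cos_comp. eapply d_cont. apply (d_lin g1 g2 d1 d2); auto.
      apply exR; intros; cont.
      intros; apply Rabs_le, COS_bound.
      rewrite RInt_const. change (scal (u - s) 1) with ((u - s) * 1). lra. }
    eapply Rle_trans. exact Hb.
    apply (Rmult_le_reg_r (sqrt rho)); auto. unfold Rdiv. rewrite Rmult_assoc, Rinv_l by lra. nra.
  - set (r := sqrt (P * rho)).
    assert (Hr : 1 <= r) by (unfold r; rewrite <- sqrt_1; apply sqrt_le_1_alt; lra).
    assert (Hr2 : r ^ 2 = P * rho) by (unfold r; apply pow2_sqrt; nra).
    assert (Hrr : sqrt rho <= r) by (unfold r; apply sqrt_le_1_alt; nra).
    assert (Hg := glue (fun t => P * (x1 * g1 t + x2 * g2 t) + c) (fun t => P * (x1 * d1 t + x2 * d2 t))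
         (fun t => P * (x1 * e1 t + x2 * e2 t)) (fun t => P * (x1 * f1 t + x2 * f2 t)) r kap M2 M3 l).
    assert (Hgl : Rabs (RInt (fun t => cos (P * (x1 * g1 t + x2 * g2 t) + c)) s u) <= INR n * (K1 / r)).
    { apply Hg; auto.
      - intro t; apply d_lin; auto.
      - intro t; apply d_lin0; auto.
      - intro t; apply d_lin0; auto.
      - intros t Ht. rewrite Hr2, Rabs_mult, (Rabs_pos_eq P) by lra.
        pose proof (lin_bound x1 x2 (e1 t) (e2 t)). pose proof (Hm2 t Ht). fold rho in H. fold M2 in H0.
        assert (0 <= Rabs (e1 t) + Rabs (e2 t)) by (pose proof (Rabs_pos (e1 t)); pose proof (Rabs_pos (e2 t)); lra).
        assert (rho * (Rabs (e1 t) + Rabs (e2 t)) <= rho * M2) by (apply Rmult_le_compat_l; lra).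
        nra.
      - intros t Ht. rewrite Hr2, Rabs_mult, (Rabs_pos_eq P) by lra.
        pose proof (lin_bound x1 x2 (f1 t) (f2 t)). pose proof (Hm3 t Ht). fold rho in H. fold M3 in H0.
        assert (0 <= Rabs (f1 t) + Rabs (f2 t)) by (pose proof (Rabs_pos (f1 t)); pose proof (Rabs_pos (f2 t)); lra).
        assert (rho * (Rabs (f1 t) + Rabs (f2 t)) <= rho * M3) by (apply Rmult_le_compat_l; lra).
        nra.
      - intros t Ht. rewrite Hr2.
        assert (Hk2 : kap ^ 2 <= e1 t ^ 2 + e2 t ^ 2).
        { pose proof (Cu t ltac:(lra)). rewrite <- (pow2_sqrt (e1 t ^ 2 + e2 t ^ 2)) by nra. nra. }
        destruct (dich_alg (d1 t) (d2 t) (e1 t) (e2 t) x1 x2 kap) as [HA | HB]; auto.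
        apply U; lra. apply (ortho d1 d2 e1 e2); auto.
        + left. replace ((P * rho) ^ 2) with (P ^ 2 * (x1 ^ 2 + x2 ^ 2)) by (unfold rho; rewrite Rpow_mult_distr, pow2_sqrt; [ring | nra]).
          replace ((P * (x1 * d1 t + x2 * d2 t)) ^ 2) with (P ^ 2 * (x1 * d1 t + x2 * d2 t) ^ 2) by ring.
          replace ((x1 * d1 t + x2 * d2 t)) with (x1 * d1 t + x2 * d2 t) in HA by ring.
          assert (0 < P ^ 2) by nra. nra.
        + right. replace ((P * rho) ^ 2) with (P ^ 2 * (x1 ^ 2 + x2 ^ 2)) by (unfold rho; rewrite Rpow_mult_distr, pow2_sqrt; [ring | nra]).
          replace ((P * (x1 * e1 t + x2 * e2 t)) ^ 2) with (P ^ 2 * (x1 * e1 t + x2 * e2 t) ^ 2) by ring.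
          assert (0 < P ^ 2) by nra. nra.
      - rewrite Rinv_r by lra. lra. }
    unfold P in Hgl. eapply Rle_trans. exact Hgl.
    assert (K1 / r <= K1 / sqrt rho).
    { unfold Rdiv. apply Rmult_le_compat_l; auto. apply Rinv_le_contravar; auto. }
    assert (INR n * (K1 / r) <= INR n * (K1 / sqrt rho)) by (apply Rmult_le_compat_l; lra).
    assert (INR n * (K1 / sqrt rho) <= (1 + INR n * K1) / sqrt rho).
    { unfold Rdiv. rewrite <- Rmult_assoc. apply Rmult_le_compat_r. apply Rlt_le, Rinv_0_lt_compat; auto. lra. }
    lra.
Qed.


Definition sumL {A} (l : list A) (f : A -> R) : R := fold_right Rplus 0 (map f l).

Lemma sumL_ext {A} (l : list A) f g : (forall x, In x l -> f x = g x) -> sumL l f = sumL l g.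
Proof. induction l; simpl; auto. intros H. unfold sumL in *; simpl. rewrite H, IHl; auto. Qed.
Lemma sumL_le {A} (l : list A) f g : (forall x, In x l -> f x <= g x) -> sumL l f <= sumL l g.
Proof. induction l; simpl; intros H; unfold sumL in *; simpl. lra. pose proof (H a (or_introl eq_refl)). pose proof (IHl (fun x Hx => H x (or_intror Hx))). lra. Qed.
Lemma sumL_plus {A} (l : list A) f g : sumL l (fun x => f x + g x) = sumL l f + sumL l g.
Proof. induction l; unfold sumL in *; simpl; [lra|]. rewrite IHl. ring. Qed.
Lemma sumL_scal {A} (l : list A) c f : sumL l (fun x => c * f x) = c * sumL l f.
Proof. induction l; unfold sumL in *; simpl; [ring|]. rewrite IHl. ring. Qed.
Lemma sumL_const {A} (l : list A) c : sumL l (fun _ => c) = INR (length l) * c.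
Proof. induction l; unfold sumL in *; simpl length; [simpl; ring|]. rewrite S_INR. simpl. rewrite IHl. ring. Qed.
Lemma sumL_mult {A} (l l' : list A) f g : sumL l f * sumL l' g = sumL l (fun x => sumL l' (fun y => f x * g y)).
Proof.
  induction l; unfold sumL in *; simpl; [ring|]. rewrite <- IHl.
  rewrite Rmult_plus_distr_r. f_equal. fold (sumL l' g). fold (sumL l' (fun y => f a * g y)).
  rewrite sumL_scal. reflexivity.
Qed.
Lemma extract {A} (l : list A) (F H : A -> R) (x : A) G :
  In x l -> (forall y, In y l -> H y <= F y) -> G + H x <= F x -> G + sumL l H <= sumL l F.
Proof.
  induction l as [|b l IH]; intros Hin Hle Hx; [destruct Hin|]. unfold sumL in *; simpl.
  destruct Hin as [<- | Hin].
  - pose proof (sumL_le l H F (fun y Hy => Hle y (or_intror Hy))). unfold sumL in H0. lra.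
  - pose proof (IH Hin (fun y Hy => Hle y (or_intror Hy)) Hx). pose proof (Hle b (or_introl eq_refl)). lra.
Qed.

Lemma fst_fold (l : list (Z * Z)) (F : Z * Z -> C) : fst (fold_right Cplus 0%C (map F l)) = sumL l (fun x => fst (F x)).
Proof. induction l; unfold sumL in *; simpl; auto. rewrite IHl; reflexivity. Qed.
Lemma snd_fold (l : list (Z * Z)) (F : Z * Z -> C) : snd (fold_right Cplus 0%C (map F l)) = sumL l (fun x => snd (F x)).
Proof. induction l; unfold sumL in *; simpl; auto. rewrite IHl; reflexivity. Qed.

Lemma is_RInt_sumL {A} (l : list A) (F : A -> R -> R) s u :
  (forall x, In x l -> ex_RInt (F x) s u) ->
  is_RInt (fun t => sumL l (fun x => F x t)) s u (sumL l (fun x => RInt (F x) s u)).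
Proof.
  induction l as [|b l IH]; intros H; unfold sumL in *; simpl.
  - pose proof (is_RInt_const (V:=R_NormedModule) s u 0) as H0.
    assert (E : scal (u - s) (0:R) = 0) by (change (scal (u-s) (0:R)) with ((u-s)*0); req; ring).
    change (is_RInt (fun _ => 0) s u (scal (u - s) (0:R))) in H0. rewrite E in H0. exact H0.
  - apply (is_RInt_plus (V:=R_NormedModule) (F b) (fun t => fold_right Rplus 0 (map (fun x => F x t) l))).
    apply (RInt_correct (V:=R_CompleteNormedModule)). apply H; left; auto.
    apply IH. intros; apply H; right; auto.
Qed.

Lemma RInt_sumL {A} (l : list A) (F : A -> R -> R) s u :
  (forall x, In x l -> ex_RInt (F x) s u) ->
  RInt (fun t => sumL l (fun x => F x t)) s u = sumL l (fun x => RInt (F x) s u).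
Proof. intros. apply is_RInt_unique. apply is_RInt_sumL; auto. Qed.
Lemma ex_RInt_sumL {A} (l : list A) (F : A -> R -> R) s u :
  (forall x, In x l -> ex_RInt (F x) s u) ->
  ex_RInt (fun t => sumL l (fun x => F x t)) s u.
Proof. intros. eexists. apply is_RInt_sumL; auto. Qed.

Definition th (g1 g2 : R -> R) (mu : Z * Z) (t : R) : R :=
  2 * PI * (IZR (fst mu) * g1 t + IZR (snd mu) * g2 t).
Definition fm (a : Z * Z -> C) g1 g2 mu t : C := Cmult (a mu) (cexpi (th g1 g2 mu t)).
Definition Tm (a : Z * Z -> C) g1 g2 mu nu t : R :=
  fst (fm a g1 g2 mu t) * fst (fm a g1 g2 nu t) + snd (fm a g1 g2 mu t) * snd (fm a g1 g2 nu t).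

Lemma Phi_sq m a g1 g2 t :
  Cmod (Phi m a (g1 t, g2 t)) ^ 2 = sumL (Elam m) (fun mu => sumL (Elam m) (fun nu => Tm a g1 g2 mu nu t)).
Proof.
  unfold Cmod. rewrite pow2_sqrt by (pose proof (pow2_ge_0 (fst (Phi m a (g1 t, g2 t)))); pose proof (pow2_ge_0 (snd (Phi m a (g1 t, g2 t)))); lra).
  unfold Phi. rewrite fst_fold, snd_fold. simpl (fst (g1 t, g2 t)). simpl (snd (g1 t, g2 t)).
  rewrite !pow2_ge_0 || idtac.
  replace (sumL (Elam m) (fun x => fst (Cmult (a x) (cexpi (2 * PI * (IZR (fst x) * g1 t + IZR (snd x) * g2 t)))))) with
     (sumL (Elam m) (fun x => fst (fm a g1 g2 x t))) by reflexivity.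
  replace (sumL (Elam m) (fun x => snd (Cmult (a x) (cexpi (2 * PI * (IZR (fst x) * g1 t + IZR (snd x) * g2 t)))))) with
     (sumL (Elam m) (fun x => snd (fm a g1 g2 x t))) by reflexivity.
  rewrite !Rmult_1_r || idtac. simpl pow. rewrite !Rmult_1_r.
  rewrite !sumL_mult. rewrite <- sumL_plus. apply sumL_ext; intros. rewrite <- sumL_plus. reflexivity.
Qed.

Lemma Tm_diag a g1 g2 mu t : Tm a g1 g2 mu mu t = Cmod (a mu) ^ 2.
Proof.
  unfold Tm, fm, Cmod, cexpi. rewrite pow2_sqrt by (pose proof (pow2_ge_0 (fst (a mu))); pose proof (pow2_ge_0 (snd (a mu))); lra).
  destruct (a mu) as [A B]. simpl.
  pose proof (sin2_cos2 (th g1 g2 mu t)). unfold Rsqr in H.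
  replace ((A * cos (th g1 g2 mu t) - B * sin (th g1 g2 mu t)) * (A * cos (th g1 g2 mu t) - B * sin (th g1 g2 mu t)) +
    (A * sin (th g1 g2 mu t) + B * cos (th g1 g2 mu t)) * (A * sin (th g1 g2 mu t) + B * cos (th g1 g2 mu t)))
   with ((A * A + B * B) * (sin (th g1 g2 mu t) * sin (th g1 g2 mu t) + cos (th g1 g2 mu t) * cos (th g1 g2 mu t))) by ring.
  rewrite H. ring.
Qed.

Lemma sin_as_cos x : sin x = cos (x + - (PI / 2)).
Proof. rewrite cos_plus, cos_neg, sin_neg, cos_PI2, sin_PI2. ring. Qed.

Lemma Tm_off a g1 g2 mu nu t :
  Tm a g1 g2 mu nu t =
   (fst (a mu) * fst (a nu) + snd (a mu) * snd (a nu)) *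
     cos (2 * PI * ((IZR (fst mu) - IZR (fst nu)) * g1 t + (IZR (snd mu) - IZR (snd nu)) * g2 t) + 0)
 + (fst (a mu) * snd (a nu) - snd (a mu) * fst (a nu)) *
     cos (2 * PI * ((IZR (fst mu) - IZR (fst nu)) * g1 t + (IZR (snd mu) - IZR (snd nu)) * g2 t) + - (PI / 2)).
Proof.
  rewrite <- sin_as_cos, Rplus_0_r.
  replace (2 * PI * ((IZR (fst mu) - IZR (fst nu)) * g1 t + (IZR (snd mu) - IZR (snd nu)) * g2 t))
    with (th g1 g2 mu t - th g1 g2 nu t) by (unfold th; ring).
  rewrite cos_minus, sin_minus. unfold Tm, fm, cexpi.
  destruct (a mu) as [A B]; destruct (a nu) as [C0 D]. simpl. ring.
Qed.

Lemma pair_lb (p q Jc Js Bu S : R) :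
  Rabs Jc <= Bu -> Rabs Js <= Bu -> Rabs p + Rabs q <= S -> - (S * Bu) <= p * Jc + q * Js.
Proof.
  intros H1 H2 H3.
  assert (Rabs (p * Jc) <= Rabs p * Bu) by (rewrite Rabs_mult; apply Rmult_le_compat_l; auto; apply Rabs_pos).
  assert (Rabs (q * Js) <= Rabs q * Bu) by (rewrite Rabs_mult; apply Rmult_le_compat_l; auto; apply Rabs_pos).
  assert (0 <= Bu) by (eapply Rle_trans; [apply Rabs_pos | exact H1]).
  apply Rabs_le_between in H. apply Rabs_le_between in H0. nra.
Qed.

Lemma coef_bound (A B C D : R) :
  Rabs (A * C + B * D) + Rabs (A * D - B * C) <= (A ^ 2 + B ^ 2) + (C ^ 2 + D ^ 2).
Proof.
  assert (Rabs (A * C + B * D) <= ((A ^ 2 + B ^ 2) + (C ^ 2 + D ^ 2)) / 2).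
  { apply Rabs_le. pose proof (pow2_ge_0 (A - C)). pose proof (pow2_ge_0 (B - D)).
    pose proof (pow2_ge_0 (A + C)). pose proof (pow2_ge_0 (B + D)). split; nra. }
  assert (Rabs (A * D - B * C) <= ((A ^ 2 + B ^ 2) + (C ^ 2 + D ^ 2)) / 2).
  { apply Rabs_le. pose proof (pow2_ge_0 (A - D)). pose proof (pow2_ge_0 (B + C)).
    pose proof (pow2_ge_0 (A + D)). pose proof (pow2_ge_0 (B - C)). split; nra. }
  lra.
Qed.

Lemma Cmod2 (z : C) : Cmod z ^ 2 = fst z ^ 2 + snd z ^ 2.
Proof. unfold Cmod. apply pow2_sqrt. pose proof (pow2_ge_0 (fst z)); pose proof (pow2_ge_0 (snd z)); lra. Qed.

Lemma cont_phase (g1 g2 : R -> R) x1 x2 c t :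
  (forall t, continuous g1 t) -> (forall t, continuous g2 t) ->
  continuous (fun t => cos (2 * PI * (x1 * g1 t + x2 * g2 t) + c)) t.
Proof. intros. cont. Qed.

Lemma ex_Tm a g1 g2 mu nu s u :
  (forall t, continuous g1 t) -> (forall t, continuous g2 t) -> ex_RInt (Tm a g1 g2 mu nu) s u.
Proof.
  intros. apply exR; intros. eapply continuous_ext. intro t; symmetry; apply Tm_off.
  apply cR_plus; apply cR_mult; try apply cR_const; apply cont_phase; auto.
Qed.

Lemma pair_int a g1 g2 mu nu s u K Bu :
  (forall t, continuous g1 t) -> (forall t, continuous g2 t) -> s <= u ->
  (forall x1 x2 c, 0 < x1 ^ 2 + x2 ^ 2 ->
    Rabs (RInt (fun t => cos (2 * PI * (x1 * g1 t + x2 * g2 t) + c)) s u) <= K / sqrt (sqrt (x1 ^ 2 + x2 ^ 2))) ->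
  0 < zdist mu nu -> K / sqrt (zdist mu nu) <= Bu ->
  - ((Cmod (a mu) ^ 2 + Cmod (a nu) ^ 2) * Bu) <= RInt (Tm a g1 g2 mu nu) s u.
Proof.
  intros C1 C2 Hsu V Hz HB.
  set (x1 := IZR (fst mu) - IZR (fst nu)). set (x2 := IZR (snd mu) - IZR (snd nu)).
  assert (Hx : 0 < x1 ^ 2 + x2 ^ 2).
  { destruct (Rle_or_lt (x1 ^ 2 + x2 ^ 2) 0) as [h|h]; auto. unfold zdist in Hz. fold x1 x2 in Hz.
    rewrite sqrt_neg_0 in Hz; lra. }
  assert (Ez : zdist mu nu = sqrt (x1 ^ 2 + x2 ^ 2)) by reflexivity.
  rewrite (RInt_ext _ (fun t => (fst (a mu) * fst (a nu) + snd (a mu) * snd (a nu)) * cos (2 * PI * (x1 * g1 t + x2 * g2 t) + 0)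
     + (fst (a mu) * snd (a nu) - snd (a mu) * fst (a nu)) * cos (2 * PI * (x1 * g1 t + x2 * g2 t) + - (PI / 2))))
   by (intros; apply Tm_off).
  assert (E0 : ex_RInt (fun t => cos (2 * PI * (x1 * g1 t + x2 * g2 t) + 0)) s u) by (apply exR; intros; apply cont_phase; auto).
  assert (E1 : ex_RInt (fun t => cos (2 * PI * (x1 * g1 t + x2 * g2 t) + - (PI / 2))) s u) by (apply exR; intros; apply cont_phase; auto).
  rewrite (RInt_plus (V:=R_CompleteNormedModule)).
  2: { apply (ex_RInt_scal (V:=R_CompleteNormedModule)) with (k := fst (a mu) * fst (a nu) + snd (a mu) * snd (a nu)) in E0. exact E0. }
  2: { apply (ex_RInt_scal (V:=R_CompleteNormedModule)) with (k := fst (a mu) * snd (a nu) - snd (a mu) * fst (a nu)) in E1. exact E1. }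
  rewrite (RInt_scal (V:=R_CompleteNormedModule) _ _ _ _ E0).
  rewrite (RInt_scal (V:=R_CompleteNormedModule) _ _ _ _ E1).
  change (plus ?x ?y) with (x + y). change (scal ?x ?y) with (x * y).
  rewrite !Cmod2.
  apply pair_lb.
  - eapply Rle_trans. apply V; auto. rewrite <- Ez. exact HB.
  - eapply Rle_trans. apply V; auto. rewrite <- Ez. exact HB.
  - apply coef_bound.
Qed.

Lemma Zpair_dec (x y : Z * Z) : {x = y} + {x <> y}.
Proof. decide equality; apply Z.eq_dec. Qed.

Lemma total_lb a g1 g2 (l : list (Z * Z)) s u Bu :
  (forall t, continuous g1 t) -> (forall t, continuous g2 t) -> s <= u -> 0 <= Bu ->
  (forall mu nu, In mu l -> In nu l -> mu <> nu ->
     - ((Cmod (a mu) ^ 2 + Cmod (a nu) ^ 2) * Bu) <= RInt (Tm a g1 g2 mu nu) s u) ->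
  (u - s) * sumL l (fun mu => Cmod (a mu) ^ 2) - 2 * INR (length l) * sumL l (fun mu => Cmod (a mu) ^ 2) * Bu
   <= RInt (fun t => sumL l (fun mu => sumL l (fun nu => Tm a g1 g2 mu nu t))) s u.
Proof.
  intros C1 C2 Hsu HBu Hp.
  set (S := sumL l (fun mu => Cmod (a mu) ^ 2)).
  rewrite (RInt_sumL l (fun mu t => sumL l (fun nu => Tm a g1 g2 mu nu t))).
  2: { intros; apply ex_RInt_sumL; intros; apply ex_Tm; auto. }
  rewrite (sumL_ext l _ (fun mu => sumL l (fun nu => RInt (Tm a g1 g2 mu nu) s u))).
  2: { intros; apply RInt_sumL; intros; apply ex_Tm; auto. }
  assert (Hd : forall mu, RInt (Tm a g1 g2 mu mu) s u = (u - s) * Cmod (a mu) ^ 2).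
  { intro mu. rewrite (RInt_ext _ (fun _ => Cmod (a mu) ^ 2)) by (intros; apply Tm_diag).
    rewrite RInt_const. reflexivity. }
  eapply Rle_trans with (sumL l (fun mu => (u - s) * Cmod (a mu) ^ 2 + sumL l (fun nu => - ((Cmod (a mu) ^ 2 + Cmod (a nu) ^ 2) * Bu)))).
  - rewrite sumL_plus, sumL_scal. fold S.
    rewrite (sumL_ext l _ (fun mu => (- Bu * INR (length l)) * Cmod (a mu) ^ 2 + (- Bu) * S)).
    2: { intros mu _. rewrite (sumL_ext l _ (fun nu => (- Bu * Cmod (a mu) ^ 2) + (- Bu) * Cmod (a nu) ^ 2)) by (intros; ring).
         rewrite sumL_plus, sumL_const, sumL_scal. fold S. ring. }
    rewrite sumL_plus, sumL_scal, sumL_const. fold S. lra.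
  - apply sumL_le. intros mu Hmu.
    apply (extract l (fun nu => RInt (Tm a g1 g2 mu nu) s u) (fun nu => - ((Cmod (a mu) ^ 2 + Cmod (a nu) ^ 2) * Bu)) mu); auto.
    + intros nu Hnu. destruct (Zpair_dec mu nu) as [<- | Hne].
      * rewrite Hd. pose proof (pow2_ge_0 (Cmod (a mu))). nra.
      * apply Hp; auto.
    + rewrite Hd. pose proof (pow2_ge_0 (Cmod (a mu))). nra.
Qed.

Lemma exp_le (x y : R) : x <= y -> exp x <= exp y.
Proof. intros [h | ->]; [left; apply exp_increasing; auto | right; auto]. Qed.

Lemma asym (K eps C0 : R) : 0 < eps -> 0 < C0 -> 0 < K ->
  exists m0 : nat, forall m, (m0 <= m)%nat ->
    1 < lam m /\ 0 < ln (lam m) /\ 16 * K ^ 2 <= C0 * Rpower (ln (lam m)) eps.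
Proof.
  intros He HC HK.
  set (X := 16 * K ^ 2 / C0).
  assert (HX : 0 < X) by (unfold X, Rdiv; apply Rmult_lt_0_compat; [nra | apply Rinv_0_lt_compat; auto]).
  set (T := exp (ln X / eps) + 1).
  assert (HT : 1 < T) by (unfold T; pose proof (exp_pos (ln X / eps)); lra).
  set (E := exp T).
  assert (HE : T < E) by (unfold E; pose proof (exp_ineq1 T ltac:(lra)); lra).
  destruct (INR_archimed 1 (E ^ 2)) as [m0 Hm0]. lra. rewrite Rmult_1_r in Hm0.
  exists m0. intros m Hm.
  apply le_INR in Hm.
  assert (Hsq : E <= sqrt (INR m)).
  { rewrite <- (sqrt_pow2 E) by lra. apply sqrt_le_1_alt. lra. }
  assert (Hl : E <= lam m).
  { unfold lam. pose proof PI2_3_2. assert (0 <= sqrt (INR m)) by apply sqrt_pos. nra. }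
  assert (HL : T <= ln (lam m)).
  { replace T with (ln E) by (unfold E; apply ln_exp). apply ln_le; lra. }
  split; [lra | split; [lra |]].
  unfold Rpower.
  assert (ln X <= eps * ln (ln (lam m))).
  { assert (ln X / eps <= ln (ln (lam m))).
    { rewrite <- (ln_exp (ln X / eps)). apply ln_le. apply exp_pos. unfold T in HT, HL. lra. }
    apply (Rmult_le_compat_l eps) in H; [|lra]. replace (eps * (ln X / eps)) with (ln X) in H by (field; lra). lra. }
  apply exp_le in H. rewrite exp_ln in H by auto.
  unfold X in H. apply (Rmult_le_compat_l C0) in H; [|lra].
  replace (C0 * (16 * K ^ 2 / C0)) with (16 * K ^ 2) in H by (field; lra). lra.
Qed.

Lemma Rpower_pos (x y : R) : 0 < Rpower x y.
Proof. unfold Rpower; apply exp_pos. Qed.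

Lemma key_alg (lamv L eps C0 K : R) : 1 < lamv -> 0 < L -> 0 <= K ->
  16 * K ^ 2 <= C0 * Rpower L eps ->
  K / sqrt (C0 * lamv / Rpower L (3 / 2 + eps)) <= Rpower lamv (- (1 / 2)) * Rpower L (3 / 4 + eps) / 4.
Proof.
  intros Hl HL HK H16.
  set (Q := Rpower lamv (- (1 / 2)) * Rpower L (3 / 4 + eps)).
  set (Sep := C0 * lamv / Rpower L (3 / 2 + eps)).
  assert (HQ : 0 < Q) by (unfold Q; apply Rmult_lt_0_compat; apply Rpower_pos).
  assert (EQ : Q ^ 2 * Sep = C0 * Rpower L eps).
  { unfold Q, Sep. simpl pow. rewrite Rmult_1_r.
    replace (Rpower lamv (- (1 / 2)) * Rpower L (3 / 4 + eps) * (Rpower lamv (- (1 / 2)) * Rpower L (3 / 4 + eps)))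
      with ((Rpower lamv (- (1 / 2)) * Rpower lamv (- (1 / 2))) * (Rpower L (3 / 4 + eps) * Rpower L (3 / 4 + eps))) by ring.
    rewrite <- !Rpower_plus.
    replace (- (1 / 2) + - (1 / 2)) with (- (1)) by field. rewrite Rpower_Ropp, Rpower_1 by lra.
    replace (3 / 4 + eps + (3 / 4 + eps)) with ((3 / 2 + eps) + eps) by field. rewrite Rpower_plus.
    pose proof (Rpower_pos L (3 / 2 + eps)). field. lra. }
  fold Q Sep.
  destruct (Rle_or_lt Sep 0) as [hs | hs].
  - rewrite sqrt_neg_0 by auto. unfold Rdiv. rewrite Rinv_0, Rmult_0_r. lra.
  - set (w := sqrt Sep). assert (Hw : 0 < w) by (apply sqrt_lt_R0; auto).
    assert (Hw2 : w ^ 2 = Sep) by (apply pow2_sqrt; lra).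
    assert (4 * K <= Q * w).
    { destruct (Rle_or_lt (4 * K) (Q * w)) as [h|h]; auto. exfalso.
      assert (0 <= Q * w) by nra. assert ((Q * w) ^ 2 < (4 * K) ^ 2) by nra.
      replace ((Q * w) ^ 2) with (Q ^ 2 * w ^ 2) in H0 by ring. rewrite Hw2, EQ in H0. nra. }
    apply (Rmult_le_reg_r w); auto. unfold Rdiv. rewrite Rmult_assoc, Rinv_l by lra. lra.
Qed.

Theorem lemma5p4 :
  forall (g1 g2 : R -> R) (kappa0 eps C0 : R),
    smooth g1 -> smooth g2 ->
    (forall t, 0 <= t <= 1 -> (Derive g1 t) ^ 2 + (Derive g2 t) ^ 2 = 1) ->
    0 < kappa0 ->
    (forall t, 0 <= t <= 1 ->
        kappa0 <= sqrt ((Derive_n g1 2 t) ^ 2 + (Derive_n g2 2 t) ^ 2)) ->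
    0 < eps -> 0 < C0 ->
    exists m0 : nat,
      forall (m : nat), (m0 <= m)%nat ->
        (forall mu1 mu2, In mu1 (Elam m) -> In mu2 (Elam m) -> mu1 <> mu2 ->
            C0 * lam m / Rpower (ln (lam m)) (3 / 2 + eps) <= zdist mu1 mu2) ->
        forall (a : Z * Z -> C), l2sq m a = 1 ->
        forall (s u : R), 0 <= s -> s < u -> u <= 1 ->
          u - s > Rpower (lam m) (- (1 / 2)) * Rpower (ln (lam m)) (3 / 4 + eps)
                  * INR (Ncard m) ->
          / (u - s) * RInt (fun t => (Cmod (Phi m a (g1 t, g2 t))) ^ 2) s u >= 1 / 2.
Proof.
  intros g1 g2 kap eps C0 S1 S2 U Hk Cu He HC.
  assert (G1 : forall t, is_derive g1 t (Derive g1 t)) by (intro t; apply Derive_correct; apply (S1 0%nat t)).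
  assert (G2 : forall t, is_derive g2 t (Derive g2 t)) by (intro t; apply Derive_correct; apply (S2 0%nat t)).
  assert (D1 : forall t, is_derive (Derive g1) t (Derive_n g1 2 t)) by (intro t; apply Derive_correct; apply (S1 1%nat t)).
  assert (D2 : forall t, is_derive (Derive g2) t (Derive_n g2 2 t)) by (intro t; apply Derive_correct; apply (S2 1%nat t)).
  assert (E1 : forall t, is_derive (Derive_n g1 2) t (Derive_n g1 3 t)) by (intro t; apply Derive_correct; apply (S1 2%nat t)).
  assert (E2 : forall t, is_derive (Derive_n g2 2) t (Derive_n g2 3 t)) by (intro t; apply Derive_correct; apply (S2 2%nat t)).
  assert (F1 : forall t, continuous (Derive_n g1 3) t) by (intro t; eapply d_cont; apply Derive_correct; apply (S1 3%nat t)).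
  assert (F2 : forall t, continuous (Derive_n g2 3) t) by (intro t; eapply d_cont; apply Derive_correct; apply (S2 3%nat t)).
  assert (C1 : forall t, continuous g1 t) by (intro t; eapply d_cont; apply G1).
  assert (C2 : forall t, continuous g2 t) by (intro t; eapply d_cont; apply G2).
  destruct (vdc g1 g2 (Derive g1) (Derive g2) (Derive_n g1 2) (Derive_n g2 2) (Derive_n g1 3) (Derive_n g2 3) kap)
    as [K [HK V]]; auto.
  destruct (asym K eps C0) as [m0 Hm0]; auto. lra.
  exists m0. intros m Hm Hsep a Ha s u Hs Hsu Hu Hint.
  destruct (Hm0 m Hm) as [Hl [HL H16]].
  set (N := INR (Ncard m)) in *.
  assert (HN : 0 < N).
  { unfold N, Ncard. destruct (Elam m) eqn:El.
    - unfold l2sq in Ha. rewrite El in Ha. simpl in Ha. lra.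
    - simpl length. apply lt_0_INR. apply Nat.lt_0_succ. }
  set (Q := Rpower (lam m) (- (1 / 2)) * Rpower (ln (lam m)) (3 / 4 + eps)) in *.
  set (Bu := (u - s) / (4 * N)).
  assert (HQB : Q / 4 <= Bu).
  { unfold Bu. apply (Rmult_le_reg_r (4 * N)). lra. replace ((u - s) / (4 * N) * (4 * N)) with (u - s) by (field; lra). replace (Q / 4 * (4 * N)) with (Q * N) by field. lra. }
  assert (HKey := key_alg (lam m) (ln (lam m)) eps C0 K Hl HL ltac:(lra) H16). fold Q in HKey.
  set (Sep := C0 * lam m / Rpower (ln (lam m)) (3 / 2 + eps)) in *.
  assert (HSep : 0 < Sep).
  { unfold Sep, Rdiv. apply Rmult_lt_0_compat. nra. apply Rinv_0_lt_compat, Rpower_pos. }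
  assert (Hpair : forall mu nu, In mu (Elam m) -> In nu (Elam m) -> mu <> nu ->
     - ((Cmod (a mu) ^ 2 + Cmod (a nu) ^ 2) * Bu) <= RInt (Tm a g1 g2 mu nu) s u).
  { intros mu nu Hmu Hnu Hne. pose proof (Hsep mu nu Hmu Hnu Hne) as Hz. fold Sep in Hz.
    apply pair_int with K; auto. lra.
    - intros x1 x2 c Hx. apply V; auto; lra.
    - lra.
    - eapply Rle_trans; [| exact HQB]. eapply Rle_trans; [| exact HKey].
      unfold Rdiv. apply Rmult_le_compat_l. lra. apply Rinv_le_contravar. apply sqrt_lt_R0; auto.
      apply sqrt_le_1_alt; auto. }
  assert (HT := total_lb a g1 g2 (Elam m) s u Bu C1 C2 ltac:(lra) ltac:(unfold Bu, Rdiv; apply Rmult_le_pos; [lra | apply Rlt_le, Rinv_0_lt_compat; lra]) Hpair).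
  change (sumL (Elam m) (fun mu => Cmod (a mu) ^ 2)) with (l2sq m a) in HT. rewrite Ha in HT.
  change (INR (length (Elam m))) with N in HT.
  rewrite (RInt_ext _ (fun t => sumL (Elam m) (fun mu => sumL (Elam m) (fun nu => Tm a g1 g2 mu nu t)))) by (intros; apply Phi_sq).
  assert (EB : 2 * N * 1 * Bu = (u - s) / 2) by (unfold Bu; field; lra).
  rewrite EB in HT.
  apply Rle_ge. apply (Rmult_le_reg_l (u - s)). lra.
  rewrite <- Rmult_assoc, Rinv_r by lra. lra.
Qed.
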